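(* Let $X_t \subset X_{t+p}$ be finite simplicial complexes with oriented simplices, the simplices of $X_t$ carrying the same orientations as in $X_{t+p}$. Let $\mathscr{S}_{t+p}$ be a cellular sheaf on $X_{t+p}$ whose stalks are finite-dimensional inner product spaces over $\mathbb{R}$ or $\mathbb{C}$, and let $\mathscr{S}_t$ be its pullback to $X_t$. The projection cochain map $\pi: C^\bullet(X_{t+p};\mathscr{S}_{t+p})\to C^\bullet(X_t;\mathscr{S}_t)$ induces a map $\pi^\bullet: H^q(X_{t+p};\mathscr{S}_{t+p})\to H^q(X_t;\mathscr{S}_t)$ on sheaf cohomology, and the persistent sheaf Laplacian satisfies $$\operatorname{nullity}(\Delta_q^{t,p}) = \dim \operatorname{im}\, \pi^\bullet\big(H^q(X_{t+p};\mathscr{S}_{t+p})\big).$$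
   Context: A cellular sheaf $\mathscr{S}$ on a simplicial complex $X$ assigns to each simplex $\sigma$ a finite-dimensional vector space $\mathscr{S}(\sigma)$ and to each face relation $\sigma\leqslant\tau$ a linear map $\mathscr{S}_{\sigma\leqslant\tau}$, functorially (identity on $\sigma\leqslant\sigma$, compatible with composition). The pullback $\mathscr{S}_t$ has the same stalks and restriction maps as $\mathscr{S}_{t+p}$ on simplices and face relations of $X_t$. $C^q(X;\mathscr{S})=\bigoplus_{\dim\sigma=q}\mathscr{S}(\sigma)$, with inner product making distinct stalks orthogonal; thus $C^q(X_t;\mathscr{S}_t)$ is identified with the subspace of $C^q(X_{t+p};\mathscr{S}_{t+p})$ spanned by stalks over simplices of $X_t$, and $\pi$ is the orthogonal projection onto it. Signed incidence: for $\tau=[v_0,\dots,v_n]$ and $\sigma=[v_0,\dots,\hat v_i,\dots,v_n]$, $[\sigma:\tau]=(-1)^i$ (or $(-1)^{i+1}$ if $\sigma$ is oppositely oriented), and $0$ unless $\sigma$ is a codimension-one face. Coboundary: $d_q|_{\mathscr{S}(\sigma)}=\sum_{\sigma\leqslant\tau}[\sigma:\tau]\mathscr{S}_{\sigma\leqslant\tau}$; $H^q=\ker d_q/\operatorname{im} d_{q-1}$. Write $d^t, d^{t+p}$ for the coboundaries of the two complexes. Persistent sheaf Laplacian: let $\mathbb{C}^{t,p}_{q+1}=\{e\in C^{q+1}(X_{t+p};\mathscr{S}_{t+p}) : (d_q^{t+p})^*(e)\in C^q(X_t;\mathscr{S}_t)\}$, let $\eth_q^{t,p}: C^q(X_t;\mathscr{S}_t)\to\mathbb{C}^{t,p}_{q+1}$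 be the adjoint of $(d_q^{t+p})^*|_{\mathbb{C}^{t,p}_{q+1}}:\mathbb{C}^{t,p}_{q+1}\to C^q(X_t;\mathscr{S}_t)$, and set $\Delta_q^{t,p}=(\eth_q^{t,p})^*\eth_q^{t,p}+d_{q-1}^t(d_{q-1}^t)^*$, an operator on $C^q(X_t;\mathscr{S}_t)$. *)

(* Defs.v *)
From HB Require Import structures.
From mathcomp Require Import all_boot all_order all_algebra.
Set Implicit Arguments. Unset Strict Implicit. Unset Printing Implicit Defensive.
Import Order.TTheory GRing.Theory Num.Theory.
Local Open Scope ring_scope.

(* A simplex is a nonempty set of vertices; its dimension is #|s| - 1.      *)
(* X_{t+p} expresses that X_t carries the orientations of X_{t+p}.           *)
Section Complexes.
Variable V : finType.

Definition is_complex (X : {set {set V}}) : Prop :=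
  set0 \notin X /\
  (forall s t : {set V}, t \in X -> s \subset t -> s != set0 -> s \in X).

Definition is_orientation (X : {set {set V}}) (o : {set V} -> seq V) : Prop :=
  forall s, s \in X -> perm_eq (o s) (enum s).

(* number of inversions of a sequence w.r.t. the fixed enumeration of V;    *)
(* its parity is the parity of the permutation sorting the sequence.        *)
Fixpoint inversions (s : seq V) : nat :=
  if s is x :: s' then
    (count (fun y => enum_rank y < enum_rank x)%N s' + inversions s')%N
  else 0%N.

End Complexes.

Section Sheaves.
Variables (V : finType) (K : fieldType).

Definition sgn_seq (s : seq V) : K := (-1) ^+ inversions s.

(* Signed incidence [s : t]: for t = [v_0,..,v_n] (= o t) and s the face    *)
(* obtained by deleting v_i, it is (-1)^i if o s is an even permutation of  *)
(* [v_0,..,^v_i,..,v_n] and (-1)^(i+1) otherwise; 0 if s is not a          *)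
(* codimension-one face of t.                                                *)
Definition incidence (o : {set V} -> seq V) (s t : {set V}) : K :=
  if (s \subset t) && (#|t| == #|s|.+1)%N then
    if [pick w in t :\: s] is Some w then
      (-1) ^+ (index w (o t)) * sgn_seq (rem w (o t)) * sgn_seq (o s)
    else 0
  else 0.

(* A cellular sheaf: stalk S(s) = K^(stalk_dim s) (with its standard inner   *)
(* product, i.e. stalks written in orthonormal bases) and restriction maps   *)
(* S_{s <= t} : S(s) -> S(t), acting on row vectors  v |-> v *m restr s t.   *)
Record sheaf := Sheaf {
  stalk_dim : {set V} -> nat;
  restr : forall s t : {set V}, 'M[K]_(stalk_dim s, stalk_dim t) }.

Definition is_cellular_sheaf (X : {set {set V}}) (S : sheaf) : Prop :=
  (forall s, s \in X -> restr S s s = 1%:M) /\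
  (forall s t u, s \in X -> t \in X -> u \in X -> s \subset t -> t \subset u ->
     restr S s u = restr S s t *m restr S t u).

Section OneSheaf.
Variable S : sheaf.

(* Ambient coordinate space: one coordinate for each pair (s, k), s any     *)
(* simplex (subset of V), k < stalk_dim s.  C^q(X;S) is the coordinate       *)
(* subspace of pairs with s in X and dim s = q; distinct stalks are          *)
(* orthogonal.                                                               *)
Definition idx := {s : {set V} & 'I_(stalk_dim S s)}.
Definition amb := #|{: idx}|.
Definition simp (i : 'I_amb) : {set V} := tag (enum_val i).

(* orthogonal projector onto C^q(X;S) (diagonal 0/1 matrix); its row space   *)
(* is C^q(X;S) *)
Definition cochain_proj (X : {set {set V}}) (q : nat) : 'M[K]_amb :=
  \matrix_(i, j) ((i == j) && (simp i \in X) && (#|simp i| == q.+1)%N)%:R.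

(* total coboundary of the complex X (row-vector convention) *)
Definition coboundary (o : {set V} -> seq V) (X : {set {set V}}) : 'M[K]_amb :=
  \matrix_(i, j)
    let a := enum_val i in let b := enum_val j in
    if (tag a \in X) && (tag b \in X) then
      incidence o (tag a) (tag b) * restr S (tag a) (tag b) (tagged a) (tagged b)
    else 0.

Definition dq o X q : 'M[K]_amb := cochain_proj X q *m coboundary o X.
(* d_{q-1}, with d_{-1} = 0 *)
Definition dprev o X q : 'M[K]_amb := if q is q'.+1 then dq o X q' else 0.

Definition cocycles o X q : 'M[K]_amb := (cochain_proj X q :&: kermx (dq o X q))%MS.
Definition coboundaries o X q : 'M[K]_amb := dprev o X q.

(* pi^bullet : H^q(Y) -> H^q(X), [z] |-> [pi z] (pi = cochain_proj X q on    *)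
(* q-cochains) is well defined: pi maps cocycles to cocycles and             *)
(* coboundaries to coboundaries.                                            *)
Definition induces_cohomology_map o (X Y : {set {set V}}) q : Prop :=
  (cocycles o Y q *m cochain_proj X q <= cocycles o X q)%MS /\
  (coboundaries o Y q *m cochain_proj X q <= coboundaries o X q)%MS.

(* dim im pi^bullet : the image is (pi(Z^q(Y)) + B^q(X)) / B^q(X) in        *)
(* H^q(X) = Z^q(X) / B^q(X).                                                *)
Definition dim_im_induced o (X Y : {set {set V}}) q : nat :=
  (\rank (cocycles o Y q *m cochain_proj X q + coboundaries o X q)%MS
   - \rank (coboundaries o X q))%N.

Section InnerProduct.
Variable cj : K -> K.  (* conjugation: identity over R, complex conj over C *)

Definition adjmx m n (M : 'M[K]_(m, n)) : 'M[K]_(n, m) := (map_mx cj M)^T.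
Definition ip (u v : 'rV[K]_amb) : K := (u *m adjmx v) 0 0.

(* membership in C^{t,p}_{q+1} = { e in C^{q+1}(Y) : (d_q^Y)^* e in C^q(X) } *)
Definition in_Ctp o (X Y : {set {set V}}) q (e : 'rV[K]_amb) : bool :=
  (e <= cochain_proj Y q.+1)%MS &&
  (e *m adjmx (dq o Y q) <= cochain_proj X q)%MS.

(* Eth represents eth_q^{t,p} : C^q(X) -> C^{t,p}_{q+1}, the adjoint of       *)
(* (d_q^Y)^* restricted to C^{t,p}_{q+1}.                                   *)
Definition is_eth o X Y q (Eth : 'M[K]_amb) : Prop :=
  (forall u : 'rV_amb, (u <= cochain_proj X q)%MS -> in_Ctp o X Y q (u *m Eth)) /\
  (forall (e u : 'rV_amb), in_Ctp o X Y q e -> (u <= cochain_proj X q)%MS ->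
     ip (e *m adjmx (dq o Y q)) u = ip e (u *m Eth)).

Definition is_eth_adj o X Y q (Eth Eths : 'M[K]_amb) : Prop :=
  (forall e : 'rV_amb, in_Ctp o X Y q e -> (e *m Eths <= cochain_proj X q)%MS) /\
  (forall (e u : 'rV_amb), in_Ctp o X Y q e -> (u <= cochain_proj X q)%MS ->
     ip (e *m Eths) u = ip e (u *m Eth)).

(* Delta_q^{t,p} = eth^* eth + d_{q-1}^X (d_{q-1}^X)^*  (row-vector convention: *)
(* u |-> (u Eth) Eths + (u (d_{q-1})^* ) d_{q-1}).                            *)
Definition persistent_laplacian o X (Eth Eths : 'M[K]_amb) q : 'M[K]_amb :=
  Eth *m Eths + adjmx (dprev o X q) *m dprev o X q.

End InnerProduct.

Definition nullity_on (U L : 'M[K]_amb) : nat := \rank (U :&: kermx L)%MS.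

End OneSheaf.
End Sheaves.

(* Main.v *)
Require Import Defs.
From HB Require Import structures.
From mathcomp Require Import all_boot all_order all_algebra.
Import Order.TTheory GRing.Theory Num.Theory.
Local Open Scope ring_scope.
From mathcomp Require Import zify ring.
Set Implicit Arguments. Unset Strict Implicit. Unset Printing Implicit Defensive.

Section Sign.
Variables (V : finType).

Definition ltv (y w : V) : bool := (enum_rank y < enum_rank w)%N.

Lemma count_rem_in (p : pred V) w l : w \in l ->
  count p l = (p w + count p (rem w l))%N.
Proof. by move/perm_to_rem/permP => ->. Qed.

Lemma inv_rem w (l : seq V) : w \in l ->
  odd (index w l + inversions (rem w l)) =
  odd (inversions l + count (fun y => ltv y w) l).
Proof.
elim: l => //= x l IH; rewrite in_cons.
have [<-|xw] := eqVneq x w => /= [_|wl].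
  rewrite /ltv ltnn add0n !oddD /=.
  by case: (odd _); case: (odd _).

rewrite (count_rem_in _ wl) !oddD /=.
move: (IH wl); rewrite !oddD.
have : ltv x w = ~~ ltv w x.
  rewrite /ltv; have : enum_rank x != enum_rank w.
    by apply: contra xw => /eqP /enum_rank_inj ->.
  by rewrite -val_eqE /=; case: ltngtP.
move=> ->; rewrite -/(ltv w x) !oddb.
move: (odd (index w l)) (odd (inversions (rem w l))) (odd (inversions l))
  (odd (count (ltv^~ w) l)) (odd (count _ (rem w l))) (ltv w x).
by do 6! case.
Qed.

Variable K : fieldType.

Lemma sgn_rem w (l : seq V) : w \in l ->
  (-1) ^+ (index w l) * sgn_seq K (rem w l) =
  sgn_seq K l * (-1) ^+ (count (fun y => ltv y w) l).
Proof.
move=> wl; rewrite /sgn_seq -!exprD -signr_odd [RHS]/= -[RHS]signr_odd.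
by rewrite inv_rem.
Qed.

Definition cnt (w : V) (A : {set V}) : nat := count (fun y => ltv y w) (enum A).

Lemma cnt_U1 w v (A B : {set V}) : v \notin B ->
  (forall x, (x \in A) = (x == v) || (x \in B)) ->
  cnt w A = (ltv v w + cnt w B)%N.
Proof.
move=> vB hA; rewrite /cnt.
have /permP -> : perm_eq (enum A) (v :: enum B).
  apply: uniq_perm; first exact: enum_uniq.
    by rewrite /= mem_enum vB enum_uniq.
  by move=> x; rewrite mem_enum in_cons mem_enum hA.
by [].
Qed.

Lemma inc_formula o (s t : {set V}) w : perm_eq (o t) (enum t) ->
  s \subset t -> t :\: s = [set w] -> #|t| = #|s|.+1 ->
  incidence K o s t = sgn_seq K (o t) * sgn_seq K (o s) * (-1) ^+ (cnt w t).
Proof.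
move=> ot st E ct; rewrite /incidence st ct eqxx /=.
have wt : w \in t by have := set11 w; rewrite -E inE => /andP[].
case: pickP => [w' | H]; last by have := H w; rewrite E set11.
rewrite E inE => /eqP ->.
rewrite sgn_rem ?(perm_mem ot) ?mem_enum // (permP ot) /cnt.
by rewrite mulrAC.
Qed.

Lemma sgn_sq (l : seq V) : sgn_seq K l * sgn_seq K l = 1.
Proof. by rewrite -expr2 sqrr_sign. Qed.

Lemma incidence_nz o (s t : {set V}) : incidence K o s t != 0 ->
  (s \subset t) && (#|t| == #|s|.+1)%N.
Proof. by rewrite /incidence; case: ifP => //; rewrite eqxx. Qed.

Lemma term_nz o (s t u : {set V}) :
  incidence K o s t * incidence K o t u != 0 ->
  [/\ s \subset t, #|t| = #|s|.+1, t \subset u & #|u| = #|t|.+1].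
Proof.
rewrite mulf_eq0 negb_or => /andP[/incidence_nz/andP[h1 /eqP h2]
  /incidence_nz/andP[h3 /eqP h4]].
by split.
Qed.

Lemma dd_sum o (Y : {set {set V}}) (s u : {set V}) :
  is_complex Y -> is_orientation Y o -> s \in Y -> u \in Y ->
  \sum_(t in Y) incidence K o s t * incidence K o t u = 0.
Proof.
move=> [Y0 Yc] Yo sY uY.
case: (boolP ((s \subset u) && (#|u| == #|s|.+2)%N)) => [/andP[su /eqP cu]|nsu];
  last first.
  apply: big1 => t tY; apply/eqP; apply: contraR nsu => /term_nz[h1 h2 h3 h4].
  by rewrite (subset_trans h1 h3) h4 h2 eqxx.
have c2 : #|u :\: s| == 2%N.
  by rewrite cardsD (setIidPr su) cu -addn2 addKn.
case/cards2P: c2 => v1 [v2 [v12 E]].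
have hE x : ((x \in u) && (x \notin s)) = (x == v1) || (x == v2).
  by rewrite -in_set2 -E !inE andbC.
have hu x : (x \in u) = [|| x == v1, x == v2 | x \in s].
  case xs : (x \in s); first by rewrite (subsetP su) ?orbT.
  by rewrite orbF -hE xs andbT.
have v1s : v1 \notin s by have := hE v1; rewrite eqxx => /andP[].
have v2s : v2 \notin s by have := hE v2; rewrite eqxx orbT => /andP[].
set t1 := v1 |: s; set t2 := v2 |: s.
have t1u : t1 \subset u by apply/subsetP => x; rewrite !inE hu => /orP[->|->]; rewrite ?orbT.
have t2u : t2 \subset u by apply/subsetP => x; rewrite !inE hu => /orP[->|->]; rewrite ?orbT.
have t1Y : t1 \in Y.
  by apply: (Yc _ _ uY t1u); apply/set0Pn; exists v1; rewrite !inE eqxx.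
have t2Y : t2 \in Y.
  by apply: (Yc _ _ uY t2u); apply/set0Pn; exists v2; rewrite !inE eqxx.
have t21 : t2 != t1.
  apply/negP => /eqP e; have : v2 \in t1 by rewrite -e !inE eqxx.
  by rewrite !inE eq_sym (negbTE v12) (negbTE v2s).
have ct1 : #|t1| = #|s|.+1 by rewrite cardsU1 v1s.
have ct2 : #|t2| = #|s|.+1 by rewrite cardsU1 v2s.
have Et1 : t1 :\: s = [set v1].
  apply/setP => x; rewrite !inE; case: (eqVneq x v1) => [->|]; first by rewrite v1s.
  by move=> _ /=; case: (x \in s).
have Et2 : t2 :\: s = [set v2].
  apply/setP => x; rewrite !inE; case: (eqVneq x v2) => [->|]; first by rewrite v2s.
  by move=> _ /=; case: (x \in s).
have Eu1 : u :\: t1 = [set v2].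
  apply/setP => x; rewrite !inE hu; case: (eqVneq x v2) => [->|] /=.
    by rewrite eq_sym (negbTE v12) (negbTE v2s).
  by case: (x == v1); case: (x \in s).
have Eu2 : u :\: t2 = [set v1].
  apply/setP => x; rewrite !inE hu; case: (eqVneq x v1) => [->|] /=.
    by rewrite (negbTE v12) (negbTE v1s).
  by case: (x == v2); case: (x \in s).
have cu1 : #|u| = #|t1|.+1 by rewrite cu ct1.
have cu2 : #|u| = #|t2|.+1 by rewrite cu ct2.
rewrite (bigD1 t1) //= (bigD1 t2) /=; last by rewrite t2Y t21.
rewrite big1 ?addr0; last first.
  move=> t /andP[/andP[tY nt1] nt2]; apply/eqP; apply: contraR nt1 => /term_nz[h1 h2 h3 h4].
  have : #|t :\: s| == 1%N by rewrite cardsD (setIidPr h1) h2 subSnn.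
  case/cards1P => w Ew.
  have : w \in t :\: s by rewrite Ew set11.
  rewrite inE => /andP[ws wt].
  have ht x : (x \in t) = (x == w) || (x \in s).
    case xs : (x \in s); first by rewrite (subsetP h1) ?orbT.
    by rewrite orbF -in_set1 -Ew inE xs.
  have : (w == v1) || (w == v2) by rewrite -hE ws (subsetP h3).
  case/orP => /eqP ew.
    by apply/eqP/setP => x; rewrite ht ew !inE.
  by exfalso; apply/(negP nt2)/eqP/setP => x; rewrite ht ew !inE.
have Ot1 := Yo _ t1Y; have Ot2 := Yo _ t2Y; have Ou := Yo _ uY.
rewrite (inc_formula Ot1 _ Et1 ct1) ?subsetUr //.
rewrite (inc_formula Ot2 _ Et2 ct2) ?subsetUr //.
rewrite (inc_formula Ou t1u Eu1 cu1) (inc_formula Ou t2u Eu2 cu2).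
have hu1 x : (x \in u) = (x == v2) || (x \in t1).
  by rewrite hu !inE; case: (x == v1); case: (x == v2).
have hu2 x : (x \in u) = (x == v1) || (x \in t2).
  by rewrite hu !inE; case: (x == v1); case: (x == v2).
have v2t1 : v2 \notin t1 by rewrite !inE eq_sym (negbTE v12) (negbTE v2s).
have v1t2 : v1 \notin t2 by rewrite !inE (negbTE v12) (negbTE v1s).
rewrite (cnt_U1 v2 v1t2 hu2) (cnt_U1 v1 v2t1 hu1).
rewrite !(cnt_U1 _ v1s (fun x => in_setU1 x v1 s)) !(cnt_U1 _ v2s (fun x => in_setU1 x v2 s)).
rewrite /ltv !ltnn !add0n.
have -> : (enum_rank v2 < enum_rank v1)%N = ~~ (enum_rank v1 < enum_rank v2)%N.
  have : enum_rank v1 != enum_rank v2.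
    by apply: contra v12 => /eqP /enum_rank_inj ->.
  by rewrite -val_eqE /=; case: ltngtP.
move: (enum_rank v1 < enum_rank v2)%N => b.
rewrite !exprD.
set e1 := sgn_seq K (o t1); set e2 := sgn_seq K (o t2).
have E1 := sgn_sq (o t1); have E2 := sgn_sq (o t2).
rewrite -/e1 in E1; rewrite -/e2 in E2.
set a := sgn_seq K (o s); set z := sgn_seq K (o u).
set p := (-1) ^+ cnt v1 s; set r := (-1) ^+ cnt v2 s.
transitivity ((e1 * e1) * (a * z * p * r) * (-1) ^+ b + (e2 * e2) * (a * z * p * r) * (-1) ^+ (~~ b)).
  by rewrite /p /r; ring.
by rewrite E1 E2 !mul1r; case: b; rewrite /= expr1 expr0 ?mulrN1 ?mulr1 ?addrN ?addNr.
Qed.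

End Sign.

Section Comb.
Variables (V : finType) (K : fieldType) (S : sheaf V K).
Local Notation n := (amb S).
Local Notation cp := (cochain_proj S).

Definition pr (X : {set {set V}}) q (i : 'I_n) : bool :=
  (simp i \in X) && (#|simp i| == q.+1)%N.

Lemma cp_diag X q : cp X q = diag_mx (\row_i (pr X q i)%:R).
Proof.
apply/matrixP => i j; rewrite !mxE /pr.
by case: eqP => [->|]; rewrite ?eqxx ?mulr1n ?mulr0n //= andbA.
Qed.

Lemma cpE X q i j : cp X q i j = ((i == j) && pr X q i)%:R.
Proof. by rewrite mxE /pr andbA. Qed.

Lemma cp_idem X q : cp X q *m cp X q = cp X q.
Proof.
rewrite cp_diag mulmx_diag; congr diag_mx; apply/rowP => i; rewrite !mxE.
rewrite -natrM; by case: pr.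
Qed.

Lemma cp_adj (cj : {rmorphism K -> K}) X q : adjmx cj (cp X q) = cp X q.
Proof.
rewrite /adjmx cp_diag map_diag_mx tr_diag_mx; congr diag_mx.
by apply/rowP => i; rewrite !mxE rmorph_nat.
Qed.

Lemma cp_sub (X Y : {set {set V}}) q : X \subset Y -> cp X q *m cp Y q = cp X q.
Proof.
move=> XY; rewrite !cp_diag mulmx_diag; congr diag_mx; apply/rowP => i.
rewrite !mxE /pr; case: (boolP (simp i \in X)) => //= iX.
  by rewrite (subsetP XY _ iX) /= -natrM; case: eqP.
by rewrite mul0r.
Qed.

Lemma cob_nz o X i j : coboundary S o X i j != 0 ->
  [/\ simp i \in X, simp j \in X, simp i \subset simp j &
      #|simp j| = (#|simp i|).+1].
Proof.
rewrite mxE /simp; case: ifP => [/andP[iX jX]|]; last by rewrite eqxx.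
rewrite mulf_eq0 negb_or => /andP[/incidence_nz/andP[h1 /eqP h2] _].
by split.
Qed.

Lemma cp_cob_cp o (X Y : {set {set V}}) q : X \subset Y ->
  cp Y q *m coboundary S o X *m cp X q.+1 = cp Y q *m coboundary S o X.
Proof.
move=> XY; rewrite !cp_diag mul_diag_mx mul_mx_diag; apply/matrixP => i j.
have := @cob_nz o X i j; move: (coboundary S o X) => D Dnz.
rewrite !mxE; have [->|nz] := eqVneq (D i j) 0; first by rewrite !mulr0 mul0r.
have [iX jX sij cij] := Dnz nz.
rewrite /pr; case: (boolP (simp i \in Y)) => //= iY; last by rewrite !mul0r.
by case: eqP => [ci|]; rewrite ?mul0r // jX cij ci eqxx mulr1.
Qed.

Lemma cp_cob_cp_sub o (X Y : {set {set V}}) q : is_complex X -> X \subset Y ->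
  cp Y q *m coboundary S o Y *m cp X q.+1 =
  cp X q *m coboundary S o X *m cp X q.+1.
Proof.
move=> [X0 Xc] XY; rewrite !cp_diag !mul_diag_mx !mul_mx_diag.
apply/matrixP => i j; rewrite !mxE /pr.
case: (boolP (simp j \in X)) => jX /=; last first.
  by rewrite !mulr0.
rewrite (subsetP XY _ jX) !andbT.
case: (boolP (#|simp j| == q.+2)%N) => cj /=; last by rewrite !mulr0.
rewrite !mulr1.
case: (boolP (incidence K o (simp i) (simp j) == 0)) => [/eqP z|nz].
  by rewrite /simp in z; rewrite z !mul0r !if_same !mulr0.
move/incidence_nz: nz => /andP[sij /eqP cij].
have iX : simp i \in X.
  apply: (Xc _ _ jX sij); apply/eqP => i0.
  by move: cij cj; rewrite i0 cards0 => ->.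
have ci : (#|simp i| == q.+1)%N by move: cj; rewrite cij eqSS.
by rewrite iX (subsetP XY _ iX) ci.
Qed.

Definition dent o (Y : {set {set V}}) (a b : idx S) : K :=
  if (tag a \in Y) && (tag b \in Y) then
    incidence K o (tag a) (tag b) * restr S (tag a) (tag b) (tagged a) (tagged b)
  else 0.

Lemma cob_sq_entry o Y i k :
  (coboundary S o Y *m coboundary S o Y) i k =
  \sum_(t : {set V}) \sum_(l : 'I_(stalk_dim S t))
     dent o Y (enum_val i) (Tagged _ l) * dent o Y (Tagged _ l) (enum_val k).
Proof.
rewrite mxE (reindex (@enum_rank (idx S))) /=; last first.
  by apply: onW_bij; apply: enum_rank_bij.
rewrite [RHS]sig_big_dep /=.
by apply: eq_bigr => -[t l] _; rewrite !mxE enum_rankK.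
Qed.

Lemma cob_cob o (Y : {set {set V}}) q : is_complex Y -> is_orientation Y o ->
  is_cellular_sheaf Y S ->
  cp Y q *m coboundary S o Y *m cp Y q.+1 *m coboundary S o Y = 0.
Proof.
move=> Yc Yo [_ Ycomp].
rewrite cp_cob_cp // -mulmxA cp_diag mul_diag_mx; apply/matrixP => i k.
rewrite [LHS]mxE [RHS]mxE cob_sq_entry.
rewrite [X in X * _]mxE.
case: (boolP (pr Y q i)) => /= [/andP[sY _]|]; last by rewrite mul0r.
rewrite mul1r.
rewrite /simp in sY; case: (enum_val i) sY => s k0 /= sY; case: (enum_val k) => u m0.
rewrite /dent /=.
case: (boolP (u \in Y)) => uY; last first.
  by apply: big1 => t _; apply: big1 => l _; rewrite andbF mulr0.
transitivity (\sum_(t in Y) incidence K o s t * incidence K o t u * restr S s u k0 m0).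
  rewrite [RHS]big_mkcond /=; apply: eq_bigr => t _.
  case: (boolP (t \in Y)) => tY /=; last first.
    by apply: big1 => l _; rewrite andbF mul0r.
  rewrite sY /=.
  under eq_bigr => l _ do rewrite mulrACA.
  rewrite -mulr_sumr.
  have [->|nz] := eqVneq (incidence K o s t * incidence K o t u) 0.
    by rewrite !mul0r.
  have [h1 h2 h3 h4] := term_nz nz.
  by rewrite (Ycomp s t u) // [in RHS]mxE.
by rewrite -mulr_suml dd_sum // mul0r.
Qed.

End Comb.

Section LinAlg.
Variable K : numFieldType.
Variable cj : {rmorphism K -> K}.
Hypothesis cjK : involutive cj.
Hypothesis cj_pos : forall x : K, 0 <= x * cj x.

Local Notation "A ^H" := (adjmx cj A) (at level 8, format "A ^H").

Lemma adjmxM m n p (A : 'M[K]_(m, n)) (B : 'M[K]_(n, p)) :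
  (A *m B)^H = B^H *m A^H.
Proof. by rewrite /adjmx map_mxM trmx_mul. Qed.

Lemma adjmxK m n (A : 'M[K]_(m, n)) : (A^H)^H = A.
Proof.
rewrite /adjmx map_trmx trmxK -map_mx_comp; apply/matrixP => i j.
by rewrite !mxE /= cjK.
Qed.

Lemma adjmxD m n (A B : 'M[K]_(m, n)) : (A + B)^H = A^H + B^H.
Proof. by rewrite /adjmx map_mxD linearD. Qed.

Lemma adjmx0 m n : (0 : 'M[K]_(m, n))^H = 0.
Proof. by rewrite /adjmx map_mx0 trmx0. Qed.

Lemma mxrank_adj m n (A : 'M[K]_(m, n)) : \rank A^H = \rank A.
Proof. by rewrite /adjmx mxrank_tr mxrank_map. Qed.

Lemma mul_adj_diag m n (u : 'M[K]_(m, n)) i :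
  (u *m u^H) i i = \sum_j u i j * cj (u i j).
Proof. by rewrite !mxE; apply: eq_bigr => j _; rewrite !mxE. Qed.

Lemma mul_adj_diag_ge0 m n (u : 'M[K]_(m, n)) i : 0 <= (u *m u^H) i i.
Proof. by rewrite mul_adj_diag sumr_ge0. Qed.

Lemma mul_adj_diag_eq0 m n (u : 'M[K]_(m, n)) i :
  (u *m u^H) i i = 0 -> forall j, u i j = 0.
Proof.
rewrite mul_adj_diag => H j.
have := psumr_eq0P (P := predT) (fun j _ => cj_pos (u i j)) H (i:=j) isT.
by move/eqP; rewrite mulf_eq0 fmorph_eq0 orbb => /eqP.
Qed.

Lemma mul_adj_eq0 m n (u : 'M[K]_(m, n)) : u *m u^H = 0 -> u = 0.
Proof.
move=> H; apply/matrixP => i j; rewrite mxE.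
by apply: mul_adj_diag_eq0; rewrite H mxE.
Qed.

Lemma rank_mul_adj m n (B : 'M[K]_(m, n)) : \rank (B *m B^H) = \rank B.
Proof.
apply/eqP; rewrite eqn_leq mxrankM_maxl /=.
have H1: (kermx (B *m B^H) <= kermx B)%MS.
  apply/sub_kermxP; apply: mul_adj_eq0.
  have /sub_kermxP := submx_refl (kermx (B *m B^H)).
  rewrite !mulmxA => H.
  by rewrite adjmxM !mulmxA H !mul0mx.
move: (mxrankS H1); rewrite !mxrank_ker => H2.
have := rank_leq_row B; have := rank_leq_row (B *m B^H).
move: H2; set a := \rank _; set b := \rank _. lia.
Qed.

Lemma ortho_rank m1 m2 n (W : 'M[K]_(m1, n)) (B : 'M[K]_(m2, n)) :
  (B <= W)%MS -> \rank (W :&: kermx B^H)%MS = (\rank W - \rank B)%N.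
Proof.
move=> sBW; have := mxrank_mul_ker W B^H.
have -> : \rank (W *m B^H) = \rank B.
  apply/eqP; rewrite eqn_leq; apply/andP; split.
    by rewrite -(mxrank_adj B) mxrankM_maxr.
  by rewrite -{1}(rank_mul_adj B) mxrankS // submxMr.
move=> <-; lia.
Qed.

Lemma sub_idemP m n (P : 'M[K]_n) (u : 'M[K]_(m, n)) :
  P *m P = P -> (u <= P)%MS = (u *m P == u).
Proof.
move=> PP; apply/idP/idP.
  by case/submxP => x ->; rewrite -mulmxA PP.
by move/eqP <-; rewrite submxMl.
Qed.

Lemma rv_adj_eq0 n (x : 'rV[K]_n) : (x *m x^H) 0 0 = 0 -> x = 0.
Proof.
move=> H; apply/matrixP => i j; rewrite mxE (ord1 i).
exact: mul_adj_diag_eq0 H j.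
Qed.

Lemma adj_idem n (P : 'M[K]_n) m (A : 'M[K]_(m, n)) :
  P *m P = P -> P^H = P -> (A <= P)%MS -> P *m A^H = A^H.
Proof.
move=> PP PH; rewrite (sub_idemP _ PP) => /eqP {2}<-.
by rewrite adjmxM PH.
Qed.

Section Core.
Variable n : nat.
Variables (P Q' Q DY B Eth Eths : 'M[K]_n).
Hypotheses (PP : P *m P = P) (PH : P^H = P).
Hypotheses (QQ : Q *m Q = Q) (QH : Q^H = Q).
Hypotheses (QQ' : Q' *m Q' = Q') (QH' : Q'^H = Q').
Hypothesis PQ' : P *m Q' = P.
Hypothesis DYQ' : Q' *m DY = DY.
Hypothesis DYQ : DY *m Q = DY.
Let Z := (Q' :&: kermx DY)%MS.
Hypothesis BZ : (B <= Z *m P)%MS.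
Let ctp (e : 'rV[K]_n) := (e <= Q)%MS && (e *m DY^H <= P)%MS.
Hypothesis Heth1 : forall u : 'rV[K]_n, (u <= P)%MS -> ctp (u *m Eth).
Hypothesis Heth2 : forall e u : 'rV[K]_n, ctp e -> (u <= P)%MS ->
  (e *m DY^H *m u^H) 0 0 = (e *m (u *m Eth)^H) 0 0.
Hypothesis Hadj1 : forall e : 'rV[K]_n, ctp e -> (e *m Eths <= P)%MS.
Hypothesis Hadj2 : forall e u : 'rV[K]_n, ctp e -> (u <= P)%MS ->
  (e *m Eths *m u^H) 0 0 = (e *m (u *m Eth)^H) 0 0.

Let Lap := Eth *m Eths + B^H *m B.
Let C := (Q :&: kermx (DY^H *m (1%:M - P)))%MS.
Let A := C *m DY^H.

Lemma ctpE e : ctp e = (e <= C)%MS.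
Proof.
rewrite /ctp /C sub_capmx sub_kermx (sub_idemP _ PP) mulmxA mulmxBr mulmx1.
by rewrite subr_eq0 eq_sym.
Qed.

Lemma S1 (u : 'rV[K]_n) : (u <= P)%MS -> u *m Lap = 0 ->
  u *m Eth = 0 /\ u *m B^H = 0.
Proof.
move=> uP uL.
have H0 : (u *m Lap *m u^H) 0 0 = 0 by rewrite uL mul0mx mxE.
have E1 : (u *m (Eth *m Eths) *m u^H) 0 0 = ((u *m Eth) *m (u *m Eth)^H) 0 0.
  by rewrite mulmxA Hadj2 ?Heth1.
have E2 : (u *m (B^H *m B) *m u^H) = (u *m B^H) *m (u *m B^H)^H.
  by rewrite adjmxM adjmxK !mulmxA.
move: H0; rewrite /Lap mulmxDr mulmxDl mxE E1 E2.
move/eqP; rewrite paddr_eq0 ?mul_adj_diag_ge0 // => /andP[/eqP h1 /eqP h2].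
by split; apply: rv_adj_eq0.
Qed.

Lemma adj_eq0 m p (x : 'M[K]_(m, p)) : (x^H = 0) <-> (x = 0).
Proof.
split => [h|->]; last exact: adjmx0.
by rewrite -(adjmxK x) h adjmx0.
Qed.

Lemma S2 (u : 'rV[K]_n) : (u <= P)%MS -> (u *m Eth = 0 <-> u *m A^H = 0).
Proof.
move=> uP; split.
  move=> uE; apply/adj_eq0; rewrite adjmxM adjmxK; apply/matrixP => i j; rewrite (ord1 j) [RHS]mxE.
  have ctpi : ctp (row i C) by rewrite ctpE row_sub.
  have -> : (A *m u^H) i 0 = (row i C *m DY^H *m u^H) 0 0.
    by rewrite -!row_mul [in RHS]mxE /A.
  by rewrite Heth2 // uE adjmx0 mulmx0 mxE.
move/adj_eq0; rewrite adjmxM adjmxK => h; have ce := Heth1 uP; move: (ce); rewrite ctpE => /submxP[w ew].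
apply: rv_adj_eq0; rewrite -Heth2 // {1}ew -!mulmxA.
by rewrite (mulmxA C) h mulmx0 mxE.
Qed.

Lemma AP : (A <= P)%MS.
Proof.
apply/row_subP => i; rewrite /A row_mul.
have : ctp (row i C) by rewrite ctpE row_sub.
by case/andP.
Qed.

Lemma ZDY : Z *m DY = 0.
Proof. by apply/sub_kermxP; rewrite capmxSr. Qed.

Lemma S3 : (Z *m P <= P :&: kermx A^H)%MS.
Proof.
rewrite sub_capmx submxMl /= sub_kermx -mulmxA adj_idem // ?AP //.
by rewrite /A adjmxM adjmxK mulmxA ZDY mul0mx.
Qed.

Lemma S4 : (Q' :&: kermx Z^H <= DY^H)%MS.
Proof.
have sub : (DY^H <= Q' :&: kermx Z^H)%MS.
  rewrite sub_capmx sub_kermx -adjmxM ZDY adjmx0 eqxx andbT.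
  by rewrite -DYQ' adjmxM QH' submxMl.
have [_ <-] := mxrank_leqif_sup sub.
rewrite mxrank_adj ortho_rank ?capmxSl //.
have := mxrank_mul_ker Q' DY; rewrite DYQ' -/Z => <-.
apply/eqP; lia.
Qed.

Lemma S5 : (P :&: kermx (Z *m P)^H <= A)%MS.
Proof.
apply/row_subP => i; set v := row i _.
have vP : (v <= P)%MS by apply: submx_trans (row_sub i _) (capmxSl _ _).
have vK : v *m (Z *m P)^H = 0.
  by apply/sub_kermxP; apply: submx_trans (row_sub i _) (capmxSr _ _).
have vZ : v *m Z^H = 0.
  move: vK; rewrite adjmxM PH mulmxA.
  by move: vP; rewrite (sub_idemP _ PP) => /eqP ->.
have vQ' : (v <= Q')%MS by apply: submx_trans vP _; rewrite -PQ' submxMl.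
have : (v <= DY^H)%MS.
  by apply: submx_trans S4; rewrite sub_capmx vQ' sub_kermx vZ /=.
case/submxP => e0 ev.
have DYH : DY^H = Q *m DY^H by rewrite -{1}DYQ adjmxM QH.
have ce : ctp (e0 *m Q).
  by rewrite /ctp submxMl -mulmxA -DYH -ev vP.
rewrite ev DYH mulmxA /A submxMr //.
by rewrite -ctpE.
Qed.

Lemma S6 : (P :&: kermx A^H <= Z *m P)%MS.
Proof.
have [_ <-] := mxrank_leqif_sup S3.
rewrite ortho_rank ?AP //.
have h1 := mxrankS S5.
rewrite ortho_rank ?submxMl // in h1.
have h2 : (\rank (Z *m P) <= \rank P)%N by rewrite mxrankS ?submxMl.
have h3 : (\rank A <= \rank P)%N by rewrite mxrankS ?AP.
have h4 := mxrankS S3; rewrite ortho_rank ?AP // in h4.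
apply/eqP; lia.
Qed.

Theorem core : \rank (P :&: kermx Lap)%MS = (\rank (Z *m P + B) - \rank B)%N.
Proof.
have E1 : (P :&: kermx Lap <= Z *m P :&: kermx B^H)%MS.
  apply/row_subP => i; set u := row i _.
  have uP : (u <= P)%MS by apply: submx_trans (row_sub i _) (capmxSl _ _).
  have uL : u *m Lap = 0.
    by apply/sub_kermxP; apply: submx_trans (row_sub i _) (capmxSr _ _).
  have [uE uB] := S1 uP uL.
  have uA := (S2 uP).1 uE.
  rewrite sub_capmx sub_kermx uB eqxx andbT.
  by apply: submx_trans S6; rewrite sub_capmx uP sub_kermx uA /=.
have E2 : (Z *m P :&: kermx B^H <= P :&: kermx Lap)%MS.
  apply/row_subP => i; set u := row i _.
  have uZ : (u <= Z *m P)%MS by apply: submx_trans (row_sub i _) (capmxSl _ _).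
  have uB : u *m B^H = 0.
    by apply/sub_kermxP; apply: submx_trans (row_sub i _) (capmxSr _ _).
  have uPA := submx_trans uZ S3.
  have uP : (u <= P)%MS by apply: submx_trans uPA (capmxSl _ _).
  have uA : u *m A^H = 0.
    by apply/sub_kermxP; apply: submx_trans uPA (capmxSr _ _).
  have uE := (S2 uP).2 uA.
  rewrite sub_capmx uP sub_kermx /Lap mulmxDr !mulmxA uE uB !mul0mx addr0.
  by rewrite eqxx.
have r1 := mxrankS E1; have r2 := mxrankS E2.
have r3 : \rank (Z *m P + B)%MS = \rank (Z *m P).
  apply/eqP; rewrite eqn_leq !mxrankS ?addsmxSl //.
  by rewrite addsmx_sub submx_refl BZ.
rewrite r3 -ortho_rank //.
apply/eqP; rewrite eqn_leq r1 r2 //.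
Qed.
End Core.

End LinAlg.

Lemma main_gen (K : numFieldType) (cj : {rmorphism K -> K})
  (cjK : involutive cj) (cj_pos : forall x : K, 0 <= x * cj x)
  (V : finType) (Xt Xtp : {set {set V}})
  (o : {set V} -> seq V) (S : sheaf V K) (q : nat) (Eth Eths : 'M[K]_(amb S)) :
  is_complex Xtp -> is_complex Xt -> Xt \subset Xtp ->
  is_orientation Xtp o -> is_cellular_sheaf Xtp S ->
  is_eth cj o Xt Xtp q Eth ->
  is_eth_adj cj o Xt Xtp q Eth Eths ->
  induces_cohomology_map S o Xt Xtp q /\
  nullity_on (cochain_proj S Xt q)
    (persistent_laplacian cj o Xt Eth Eths q)
  = dim_im_induced S o Xt Xtp q.
Proof.
move=> CY CX XY OY SY [Heth1 Heth2] [Hadj1 Hadj2].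
have YY : Xtp \subset Xtp by [].
have XX : Xt \subset Xt by [].
set DY := coboundary S o Xtp; set DX := coboundary S o Xt.
have ZDY : cocycles S o Xtp q *m dq S o Xtp q = 0.
  by apply/sub_kermxP; rewrite capmxSr.
have EX : cochain_proj S Xt q *m DX =
          cochain_proj S Xtp q *m DY *m cochain_proj S Xt q.+1.
  by rewrite (cp_cob_cp_sub S o q CX XY) (cp_cob_cp S o q XX).
split; first split.
- rewrite /cocycles sub_capmx submxMl /= sub_kermx /dq.
  rewrite -mulmxA (mulmxA (cochain_proj S Xt q)) cp_idem -/DX EX.
  by rewrite !mulmxA -(mulmxA _ _ DY) -/(dq S o Xtp q) ZDY !mul0mx.
- case: q {Heth1 Heth2 Hadj1 Hadj2 ZDY EX} => [|q]; first by rewrite /= mul0mx sub0mx.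
  rewrite /coboundaries /= /dq (cp_cob_cp_sub S o q CX XY) (cp_cob_cp S o q XX).
  exact: submx_refl.
rewrite /nullity_on /persistent_laplacian /dim_im_induced /coboundaries.
apply: (core cjK cj_pos (Q := cochain_proj S Xtp q.+1)).
- exact: cp_idem.
- exact: cp_adj.
- exact: cp_adj.
- exact: cp_adj.
- exact: (cp_sub _ _ XY).
- by rewrite /dq mulmxA cp_idem.
- exact: (cp_cob_cp _ _ _ YY).
- case: q {Heth1 Heth2 Hadj1 Hadj2 ZDY EX} => [|q]; first by rewrite sub0mx.
  rewrite /dprev /dq.
  have E1 : cochain_proj S Xt q *m DX =
            cochain_proj S Xtp q *m DY *m cochain_proj S Xt q.+1.
    by rewrite (cp_cob_cp_sub S o q CX XY) (cp_cob_cp S o q XX).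
  rewrite E1 submxMr // sub_capmx; apply/andP; split.
    by rewrite -(cp_cob_cp S o q YY) submxMl.
  by rewrite sub_kermx /dq mulmxA cob_cob.
- exact: Heth1.
- exact: Heth2.
- exact: Hadj2.
Qed.

Unset Implicit Arguments.

Theorem mainTheorem2 :
  (* real scalars: stalks are real inner product spaces, conj = id *)
  (forall (K : realFieldType) (V : finType) (Xt Xtp : {set {set V}})
     (o : {set V} -> seq V) (S : sheaf V K) (q : nat) (Eth Eths : 'M[K]_(amb S)),
     is_complex Xtp -> is_complex Xt -> Xt \subset Xtp ->
     is_orientation Xtp o -> is_cellular_sheaf Xtp S ->
     is_eth (fun x : K => x) o Xt Xtp q Eth ->
     is_eth_adj (fun x : K => x) o Xt Xtp q Eth Eths ->
     induces_cohomology_map S o Xt Xtp q /\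
     nullity_on (cochain_proj S Xt q)
       (persistent_laplacian (fun x : K => x) o Xt Eth Eths q)
     = dim_im_induced S o Xt Xtp q) /\
  (* complex scalars: stalks are complex inner product spaces *)
  (forall (K : numClosedFieldType) (V : finType) (Xt Xtp : {set {set V}})
     (o : {set V} -> seq V) (S : sheaf V K) (q : nat) (Eth Eths : 'M[K]_(amb S)),
     is_complex Xtp -> is_complex Xt -> Xt \subset Xtp ->
     is_orientation Xtp o -> is_cellular_sheaf Xtp S ->
     is_eth Num.conj o Xt Xtp q Eth ->
     is_eth_adj Num.conj o Xt Xtp q Eth Eths ->
     induces_cohomology_map S o Xt Xtp q /\
     nullity_on (cochain_proj S Xt q)
       (persistent_laplacian Num.conj o Xt Eth Eths q)
     = dim_im_induced S o Xt Xtp q).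
Proof.
split.
- move=> K V Xt Xtp o S q Eth Eths.
  apply: (@main_gen K (idfun : {rmorphism K -> K})) => // x.
  by rewrite /= -expr2 sqr_ge0.
- move=> K V Xt Xtp o S q Eth Eths.
  apply: (@main_gen K (Num.conj : {rmorphism K -> K})).
    exact: conjCK.
  exact: mul_conjC_ge0.
Qed.
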